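(* If a pair $(\mathfrak m,\mathfrak m^* )$ of functions $E\to\mathbb C$ on the edges of the lattice strip is imaginary complexified s-holomorphic (ICSH), then the Clifford-generator-valued discrete 1-form $\mathfrak m(z)\psi(z)\,dz+\mathfrak m^*(z)\psi^*(z)\,d\bar z$ is closed.
   Context: Fix integers $a<0<b$, $C=\{a,\dots,b\}$, $C^*=\{a+\frac12,\dots,b-\frac12\}$. $\tilde V$ has orthonormal basis $(e_\rho)_{\rho\in\{\pm1\}^C}$. For $x'\in C^*$, $\varsigma_{x'}(\rho)$ is $\rho$ with the signs of $\rho_x$, $x<x'$, flipped; $\psi_{x'}e_\rho=\frac{-\rho_{x'-1/2}+i\rho_{x'+1/2}}{\sqrt2}e_{\varsigma_{x'}(\rho)}$, $\psi^*_{x'}e_\rho=\frac{-i\rho_{x'-1/2}+\rho_{x'+1/2}}{\sqrt2}e_{\varsigma_{x'}(\rho)}$; $\mathrm{CliffGen}$ is their complex span. With $\beta=\frac12\log(\sqrt2+1)$: $T_h^{1/2}$ diagonal with entries $\exp(\frac\beta2\sum_{x=a}^{b-1}\rho_x\rho_{x+1})$, $e_\tau^\dagger T_ve_\rho=\exp(\beta\sum_{x=a}^b\rho_x\tau_x)\delta_{\tau_a\rho_a}\delta_{\tau_b\rho_b}$, $T=T_h^{1/2}T_vT_h^{1/2}$ (invertible). The lattice strip has vertices $C\times\mathbb Z\subset\mathbb C$, nearest-neighbour edges $E$ identified with their midpoints (horizontal $x'+iy$, vertical $x+iy'$, $y'\in\mathbb Z+\frac12$), faces with centres $p$; vertical edges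 with $x=a$ ($x=b$) are left (right) boundary edges. The fermions $\psi,\psi^*:E\to\mathrm{CliffGen}$ are the unique functions with $\psi(x'+iy)=T^{-y}\psi_{x'}T^y$, $\psi^*(x'+iy)=T^{-y}\psi^*_{x'}T^y$ on horizontal edges such that for any edges $z_1,z_2$ adjacent to a common vertex $v$ and face $p$, $\psi(z_1)+\frac{i|v-p|}{v-p}\psi^*(z_1)=\psi(z_2)+\frac{i|v-p|}{v-p}\psi^*(z_2)$, and $\psi(L)+i\psi^*(L)=0$, $\psi(R)-i\psi^*(R)=0$ on left/right boundary edges $L,R$. For a discrete contour $\gamma=(w_0,\dots,w_m)$ of vertices with $z_j$ the edge joining $w_{j-1},w_j$, define $\int_\gamma(\mathfrak m\psi\,dz+\mathfrak m^*\psi^*\,d\bar z)=\sum_{j=1}^m\big(\mathfrak m(z_j)\psi(z_j)(w_j-w_{j-1})+\mathfrak m^*(z_j)\psi^*(z_j)\overline{(w_j-w_{j-1})}\big)$. The form is closed if this integral vanishes for every counterclockwise plaquette contour $(w_0,w_1,w_2,w_3,w_4=w_0)$ around a face. The pair $(\mathfrak m,\mathfrak m^* )$ is ICSH if for any edges $z_1,z_2$ adjacent to a common vertex $v$ and face $p$: $\mathfrak m(z_1)-\frac{i|v-p|}{v-p}\mathfrak m^*(z_1)=\mathfrak m(z_2)-\frac{i|v-p|}{v-p}\mathfrak m^*(z_2)$. *)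

(* Defs.v *)
From HB Require Import structures.
From mathcomp Require Import all_boot all_order all_algebra.
From mathcomp Require Import complex.
From mathcomp Require Import reals sequences exp.

Set Implicit Arguments.
Unset Strict Implicit.
Unset Printing Implicit Defensive.

Import Order.TTheory GRing.Theory Num.Theory.
Local Open Scope ring_scope.
Local Open Scope complex_scope.

(*  - C = {a,...,b}; the site x in C corresponds to index |x - a| in         *)
(*    'I_(|b-a|.+1).                                                         *)
(*  - a spin configuration rho in {+-1}^C is a finite function               *)
(*    'I_(|b-a|.+1) -> bool  (true = +1, false = -1).                        *)
(*  - operators on V~ are square matrices indexed by 'I_#|spins a b|, the    *)
(*    index i standing for the basis vector e_(enum_val i); the entry        *)
(*    A i j is e_tau^dagger A e_rho with tau = enum_val i, rho = enum_val j. *)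
(*  - half-integers x' in C^* are written x' = k + 1/2 with k : int,         *)
(*    a <= k < b.                                                            *)
(*  - lattice points: vertices (x,y) : int*int stand for x + i y; faces      *)
(*    (k,l) : int*int stand for the centre (k+1/2) + i(l+1/2); edges are     *)
(*    stored by the DOUBLED coordinates (X,Y) of their midpoint, i.e. the    *)
(*    midpoint is (X + iY)/2.                                                *)

Definition spins (a b : int) := {ffun 'I_(`|b - a|%N.+1) -> bool}.

Section Strip.
Variable R : realType.
Variables a b : int.

Notation Cx := R[i].
Notation S := (spins a b).
Definition Op := 'M[Cx]_(#|S|).

(* rho_x as a complex number, x : int (meaningful for a <= x <= b). *)
Definition spin (rho : S) (x : int) : Cx :=
  if rho (inord `|x - a|) then 1 else -1.

Definition spinR (rho : S) (x : int) : R :=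
  if rho (inord `|x - a|) then 1 else -1.

Definition op_of (f : S -> S -> Cx) : Op :=
  \matrix_(i, j) f (enum_val i) (enum_val j).

Definition flip (k : int) (rho : S) : S :=
  [ffun i : 'I_(`|b - a|%N.+1) => if (a + (i : nat)%:Z <= k) then ~~ rho i else rho i].

Definition psi0 (k : int) : Op :=
  op_of (fun tau rho =>
    if tau == flip k rho
    then (- spin rho k + 'i * spin rho (k + 1)) / (Num.sqrt 2)%:C
    else 0).

Definition psi0s (k : int) : Op :=
  op_of (fun tau rho =>
    if tau == flip k rho
    then (- 'i * spin rho k + spin rho (k + 1)) / (Num.sqrt 2)%:C
    else 0).

Definition beta : R := 2^-1 * ln (Num.sqrt 2 + 1).

Definition Th_half : Op :=
  op_of (fun tau rho =>
    if tau == rho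
    then (expR (beta / 2 *
            \sum_(j < `|b - a|%N) spinR rho (a + j%:Z) * spinR rho (a + j%:Z + 1)))%:C
    else 0).

Definition Tv : Op :=
  op_of (fun tau rho =>
    if (spin tau a == spin rho a) && (spin tau b == spin rho b)
    then (expR (beta *
            \sum_(j < `|b - a|%N.+1) spinR rho (a + j%:Z) * spinR tau (a + j%:Z)))%:C
    else 0).

Definition Ttr : Op := Th_half * Tv * Th_half.

(* integer powers T^y (T is invertible) *)
Definition Tpow (y : int) : Op :=
  match y with
  | Posz n => Ttr ^+ n
  | Negz n => invmx (Ttr ^+ n.+1)
  end.

Definition is_vertex (v : int * int) : bool := (a <= v.1) && (v.1 <= b).

Definition is_face (p : int * int) : bool := (a <= p.1) && (p.1 < b).

(* horizontal edges x' + iy (doubled: (2k+1, 2y), a <= k < b) and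
   vertical edges x + iy' (doubled: (2x, 2l+1), a <= x <= b) *)
Definition is_hedge (z : int * int) : bool :=
  [&& odd `|z.1|%N, ~~ odd `|z.2|%N, (2 * a < z.1) & (z.1 < 2 * b)].
Definition is_vedge (z : int * int) : bool :=
  [&& ~~ odd `|z.1|%N, odd `|z.2|%N, (2 * a <= z.1) & (z.1 <= 2 * b)].
Definition is_edge (z : int * int) : bool := is_hedge z || is_vedge z.

Definition is_left_edge (z : int * int) : bool := is_vedge z && (z.1 == 2 * a).
Definition is_right_edge (z : int * int) : bool := is_vedge z && (z.1 == 2 * b).

Definition vpos (v : int * int) : Cx := (v.1)%:~R + 'i * (v.2)%:~R.
Definition fpos (p : int * int) : Cx :=
  ((p.1)%:~R + 2^-1) + 'i * ((p.2)%:~R + 2^-1).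
Definition epos (z : int * int) : Cx := ((z.1)%:~R + 'i * (z.2)%:~R) / 2.

(* adjacency: the edge z has v as an endpoint / is a side of face p *)
Definition adj_ev (z v : int * int) : bool :=
  (absz (z.1 - 2 * v.1)%R + absz (z.2 - 2 * v.2)%R == 1)%N.
Definition adj_ef (z p : int * int) : bool :=
  (absz (z.1 - (2 * p.1 + 1))%R + absz (z.2 - (2 * p.2 + 1))%R == 1)%N.

Definition lam (v p : int * int) : Cx :=
  'i * `|vpos v - fpos p| / (vpos v - fpos p).

Definition fermion_prop (psi psis : int * int -> Op) : Prop :=
  (forall k y : int, a <= k -> k < b ->
     psi (2 * k + 1, 2 * y) = Tpow (- y) * psi0 k * Tpow y /\
     psis (2 * k + 1, 2 * y) = Tpow (- y) * psi0s k * Tpow y) /\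
  (forall (z1 z2 v p : int * int),
     is_edge z1 -> is_edge z2 -> is_vertex v -> is_face p ->
     adj_ev z1 v -> adj_ef z1 p -> adj_ev z2 v -> adj_ef z2 p ->
     psi z1 + lam v p *: psis z1 = psi z2 + lam v p *: psis z2) /\
  (forall z, is_left_edge z -> psi z + 'i *: psis z = 0) /\
  (forall z, is_right_edge z -> psi z - 'i *: psis z = 0).

Definition ICSH (m ms : int * int -> Cx) : Prop :=
  forall (z1 z2 v p : int * int),
    is_edge z1 -> is_edge z2 -> is_vertex v -> is_face p ->
    adj_ev z1 v -> adj_ef z1 p -> adj_ev z2 v -> adj_ef z2 p ->
    m z1 - lam v p * ms z1 = m z2 - lam v p * ms z2.

(* discrete contour integral along (w_0, w_1, ..., w_m); the edge joining
   w_{j-1} and w_j has doubled midpoint coordinates w_{j-1} + w_j *)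
Definition form_term (m ms : int * int -> Cx) (psi psis : int * int -> Op)
    (w w' : int * int) : Op :=
  let z := (w.1 + w'.1, w.2 + w'.2) in
  let dw := vpos w' - vpos w in
  (m z * dw) *: psi z + (ms z * dw^*) *: psis z.

Fixpoint contour_int (m ms : int * int -> Cx) (psi psis : int * int -> Op)
    (w : int * int) (ws : seq (int * int)) : Op :=
  match ws with
  | [::] => 0
  | w' :: ws' => form_term m ms psi psis w w' + contour_int m ms psi psis w' ws'
  end.

Definition face_corners (p : int * int) : seq (int * int) :=
  [:: (p.1, p.2); (p.1 + 1, p.2); (p.1 + 1, p.2 + 1); (p.1, p.2 + 1)].

(* closedness: the integral vanishes along every counterclockwise plaquette
   contour (w_0, ..., w_4 = w_0), for every starting corner *)
Definition closed_form (m ms : int * int -> Cx) (psi psis : int * int -> Op) : Prop :=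
  forall p, is_face p -> forall r : nat, (r < 4)%N ->
    let c := rot r (face_corners p) in
    contour_int m ms psi psis (head (0, 0) c) (rcons (behead c) (head (0, 0) c)) = 0.

End Strip.

(* Main.v *)
Require Import Defs.
From HB Require Import structures.
From mathcomp Require Import all_boot all_order all_algebra.
From mathcomp Require Import complex.
From mathcomp Require Import reals sequences exp.
From mathcomp Require Import ring lra zify.
Import Order.TTheory GRing.Theory Num.Theory.
Local Open Scope ring_scope.

Lemma by_j2 (K : numFieldType) (j x y X : K) : j ^+ 2 = -1 ->
  x - y = (j^+2 + 1) * X -> x = y.
Proof. by move=> ->; rewrite addNr mul0r => /eqP; rewrite subr_eq0 => /eqP. Qed.

Lemma edge_gen (K : numFieldType) (j dw dw' la mm ms pp ps : K) : j ^+ 2 = -1 ->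
  dw' = -(la^+2) * dw * j ->
  mm * dw * pp + ms * dw' * ps =
  dw * (1 + j) / 2 * ((mm - la * ms) * (pp + la * ps)) +
  dw * (1 - j) / 2 * ((mm - (-j * la) * ms) * (pp + (-j * la) * ps)).
Proof.
move=> hj ->; apply/esym/(@by_j2 _ j _ _ (dw / 2 * (la * mm * ps - la * ms * pp + la^+2 * (j - 1) * ms * ps))) => //.
by field.
Qed.

Lemma key (K : numFieldType) (j l0 l1 l2 l3 : K)
  (pb qb pr qr pt qt pl ql mb nb mr nr mt nt ml nl : K) : j ^+ 2 = -1 ->
  l1 = -j * l0 -> l2 = -j * l1 -> l3 = -j * l2 -> l0 ^+ 2 = j ->
  pb + l0 * qb = pl + l0 * ql -> pb + l1 * qb = pr + l1 * qr ->
  pr + l2 * qr = pt + l2 * qt -> pt + l3 * qt = pl + l3 * ql ->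
  mb - l0 * nb = ml - l0 * nl -> mb - l1 * nb = mr - l1 * nr ->
  mr - l2 * nr = mt - l2 * nt -> mt - l3 * nt = ml - l3 * nl ->
  (mb * 1 * pb + nb * 1 * qb) + (mr * j * pr + nr * (-j) * qr)
  + (mt * (-1) * pt + nt * (-1) * qt) + (ml * (-j) * pl + nl * j * ql) = 0.
Proof.
move=> hj h1 h2 h3 hl P0 P1 P2 P3 M0 M1 M2 M3.
have h4 : l0 = -j * l3.
  apply: (@by_j2 _ j _ _ ((1 - j^+2) * l0)) => //; rewrite h3 h2 h1; ring.
have hl1 : l1 ^+ 2 = - j by rewrite h1 exprMn sqrrN hj hl mulN1r.
have hl2 : l2 ^+ 2 = j by rewrite h2 exprMn sqrrN hj hl1 mulN1r opprK.
have hl3 : l3 ^+ 2 = - j by rewrite h3 exprMn sqrrN hj hl2 mulN1r.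
have e0 : (1 : K) = -(l0^+2) * 1 * j.
  by rewrite hl; apply: (@by_j2 _ j _ _ 1) => //; ring.
have e1 : (-j : K) = -(l1^+2) * j * j.
  by rewrite hl1; apply: (@by_j2 _ j _ _ (-j)) => //; ring.
have e2 : (-1 : K) = -(l2^+2) * (-1) * j.
  by rewrite hl2; apply: (@by_j2 _ j _ _ (-1)) => //; ring.
have e3 : (j : K) = -(l3^+2) * (-j) * j.
  by rewrite hl3; apply: (@by_j2 _ j _ _ j) => //; ring.
rewrite (@edge_gen K j _ _ _ _ _ _ _ hj e0) (@edge_gen K j _ _ _ _ _ _ _ hj e1).
rewrite (@edge_gen K j _ _ _ _ _ _ _ hj e2) (@edge_gen K j _ _ _ _ _ _ _ hj e3).
rewrite -h1 -h2 -h3 -h4.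
rewrite -P0 -M0 P1 M1 P2 M2 P3 M3.
move: (pb + l0 * qb) (mb - l0 * nb) (pr + l1 * qr) (mr - l1 * nr)
      (pt + l2 * qt) (mt - l2 * nt) (pl + l3 * ql) (ml - l3 * nl).
move=> F0 G0 F1 G1 F2 G2 F3 G3.
apply: (@by_j2 _ j _ _ ((G0 * F0 + G1 * F1 - G2 * F2 - G3 * F3) / 2)) => //.
by field.
Qed.

Local Open Scope complex_scope.

Lemma hi2 (R : realType) : ('i%R : R[i]) ^+ 2 = -1.
Proof. exact: sqr_i. Qed.

Lemma norm_i (R : realType) : `|'i%R : R[i]| = 1.
Proof. by rewrite normc_def /= expr0n expr1n add0r sqrtr1. Qed.

Lemma i_neq0 (R : realType) : ('i%R : R[i]) != 0.
Proof. by apply/eqP; case=> /eqP; rewrite oner_eq0. Qed.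

Lemma d0E (R : realType) (k l : int) :
  vpos R (k, l) - fpos R (k, l) = - (1 + 'i%R) / 2.
Proof. rewrite /vpos /fpos /=; ring. Qed.

Lemma norm1i (R : realType) : `|1 + 'i%R : R[i]| ^+ 2 = 2.
Proof.
rewrite -add_Re2_Im2; simpc. by rewrite expr1n rmorphD rmorph1.
Qed.

Lemma lam_rot (R : realType) (v v' p : int * int) :
  vpos R v' - fpos R p = 'i%R * (vpos R v - fpos R p) ->
  vpos R v - fpos R p != 0 -> lam R v' p = -'i%R * lam R v p.
Proof.
rewrite /lam => -> hd; rewrite normrM norm_i mul1r.
apply: (@by_j2 _ 'i%R _ _ (`|vpos R v - fpos R p| / (vpos R v - fpos R p)) (hi2 R)).
by field; rewrite hd i_neq0.
Qed.

Lemma lam_facts (R : realType) (k l : int) :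
  [/\ lam R (k + 1, l) (k, l) = -'i%R * lam R (k, l) (k, l),
      lam R (k + 1, l + 1) (k, l) = -'i%R * lam R (k + 1, l) (k, l),
      lam R (k, l + 1) (k, l) = -'i%R * lam R (k + 1, l + 1) (k, l) &
      lam R (k, l) (k, l) ^+ 2 = 'i%R].
Proof.
have hd0 := d0E R k l.
have hn2 : `|vpos R (k, l) - fpos R (k, l)| ^+ 2 = 2^-1.
  rewrite hd0 normrM normrN normfV normr_nat exprMn norm1i exprVn; by field.
have d0n : vpos R (k, l) - fpos R (k, l) != 0.
  apply/eqP=> h; move: hn2; rewrite h normr0 expr0n => /eqP.
  by rewrite eq_sym invr_eq0 pnatr_eq0.
have e1 : vpos R (k + 1, l) - fpos R (k, l) = 'i%R * (vpos R (k, l) - fpos R (k, l)).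
  apply: (@by_j2 _ 'i%R _ _ (2^-1) (hi2 R)); rewrite /vpos /fpos /= !intrD; by field.
have e2 : vpos R (k + 1, l + 1) - fpos R (k, l) = 'i%R * (vpos R (k + 1, l) - fpos R (k, l)).
  apply: (@by_j2 _ 'i%R _ _ (2^-1) (hi2 R)); rewrite /vpos /fpos /= !intrD; by field.
have e3 : vpos R (k, l + 1) - fpos R (k, l) = 'i%R * (vpos R (k + 1, l + 1) - fpos R (k, l)).
  apply: (@by_j2 _ 'i%R _ _ (- 2^-1) (hi2 R)); rewrite /vpos /fpos /= !intrD; by field.
have d1n : vpos R (k + 1, l) - fpos R (k, l) != 0 by rewrite e1 mulf_neq0 // i_neq0.
have d2n : vpos R (k + 1, l + 1) - fpos R (k, l) != 0 by rewrite e2 mulf_neq0 // i_neq0.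
split; [exact: lam_rot| exact: lam_rot | exact: lam_rot|].
have hd2 : (vpos R (k, l) - fpos R (k, l)) ^+ 2 = 'i%R / 2.
  rewrite hd0.
  apply: (@by_j2 _ 'i%R _ _ (4^-1) (hi2 R)); by field.
rewrite /lam !exprMn exprVn hn2 hd2.
have hz : ('i%R : R[i]) / 2 != 0 by rewrite mulf_neq0 ?i_neq0 // invr_eq0 pnatr_eq0.
by apply: (mulIf hz); rewrite divfK // expr2 mulrA.
Qed.

Lemma conj_i (R : realType) : ('i%R : R[i])^* = - 'i%R.
Proof. by apply/eqP; rewrite eq_complex /= oppr0 !eqxx. Qed.

Lemma dws (R : realType) (k l : int) :
  [/\ vpos R (k + 1, l) - vpos R (k, l) = 1,
      vpos R (k + 1, l + 1) - vpos R (k + 1, l) = 'i%R,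
      vpos R (k, l + 1) - vpos R (k + 1, l + 1) = -1 &
      vpos R (k, l) - vpos R (k, l + 1) = -'i%R].
Proof. by split; rewrite /vpos /= ?intrD; ring. Qed.

Lemma dwc (R : realType) (k l : int) :
  [/\ Num.conj (vpos R (k + 1, l) - vpos R (k, l)) = 1,
      Num.conj (vpos R (k + 1, l + 1) - vpos R (k + 1, l)) = -'i%R,
      Num.conj (vpos R (k, l + 1) - vpos R (k + 1, l + 1)) = -1 &
      Num.conj (vpos R (k, l) - vpos R (k, l + 1)) = 'i%R].
Proof.
have [-> -> -> ->] := dws R k l.
split; rewrite ?rmorphN ?conjC1 ?conjCi ?rmorph1 //.
by apply/eqP; rewrite eq_complex /= ?oppr0 ?opprK ?eqxx.
Qed.

Ltac side := rewrite /is_edge /is_hedge /is_vedge /is_vertex /is_face /adj_ev /adj_ef /=; lia.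

Lemma entryE (R : realType) (n : nat) (A B A' B' : 'M[R[i]]_n) (x : R[i]) r c :
  A + x *: B = A' + x *: B' -> A r c + x * B r c = A' r c + x * B' r c.
Proof. by move=> h; have := congr1 (fun M : 'M[R[i]]_n => M r c) h; rewrite !mxE. Qed.

Arguments entryE {R n A B A' B' x}.

Lemma plaq (R : realType) (a b : int) (psi psis : int * int -> Op R a b)
    (m ms : int * int -> R[i]) (k l : int) :
  fermion_prop psi psis -> ICSH a b m ms -> a <= k -> k < b ->
  form_term m ms psi psis (k, l) (k + 1, l) + form_term m ms psi psis (k + 1, l) (k + 1, l + 1)
  + form_term m ms psi psis (k + 1, l + 1) (k, l + 1) + form_term m ms psi psis (k, l + 1) (k, l) = 0.
Proof.
move=> [_ [Hc _]] Hm hk1 hk2.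
have [h1 h2 h3 hl] := lam_facts R k l.
have [d1 d2 d3 d4] := dws R k l.
have [c1 c2 c3 c4] := dwc R k l.
apply/matrixP => r c; rewrite /form_term /= !mxE c1 c2 c3 c4 d1 d2 d3 d4.
have P0 := entryE r c (Hc (k + (k + 1), l + l) (k + k, l + 1 + l) (k, l) (k, l) ltac:(side) ltac:(side) ltac:(side) ltac:(side) ltac:(side) ltac:(side) ltac:(side) ltac:(side)).
have P1 := entryE r c (Hc (k + (k + 1), l + l) (k + 1 + (k + 1), l + (l + 1)) (k + 1, l) (k, l) ltac:(side) ltac:(side) ltac:(side) ltac:(side) ltac:(side) ltac:(side) ltac:(side) ltac:(side)).
have P2 := entryE r c (Hc (k + 1 + (k + 1), l + (l + 1)) (k + 1 + k, l + 1 + (l + 1)) (k + 1, l + 1) (k, l) ltac:(side) ltac:(side) ltac:(side) ltac:(side) ltac:(side) ltac:(side) ltac:(side) ltac:(side)).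
have P3 := entryE r c (Hc (k + 1 + k, l + 1 + (l + 1)) (k + k, l + 1 + l) (k, l + 1) (k, l) ltac:(side) ltac:(side) ltac:(side) ltac:(side) ltac:(side) ltac:(side) ltac:(side) ltac:(side)).
have M0 := Hm (k + (k + 1), l + l) (k + k, l + 1 + l) (k, l) (k, l) ltac:(side) ltac:(side) ltac:(side) ltac:(side) ltac:(side) ltac:(side) ltac:(side) ltac:(side).
have M1 := Hm (k + (k + 1), l + l) (k + 1 + (k + 1), l + (l + 1)) (k + 1, l) (k, l) ltac:(side) ltac:(side) ltac:(side) ltac:(side) ltac:(side) ltac:(side) ltac:(side) ltac:(side).
have M2 := Hm (k + 1 + (k + 1), l + (l + 1)) (k + 1 + k, l + 1 + (l + 1)) (k + 1, l + 1) (k, l) ltac:(side) ltac:(side) ltac:(side) ltac:(side) ltac:(side) ltac:(side) ltac:(side) ltac:(side).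
have M3 := Hm (k + 1 + k, l + 1 + (l + 1)) (k + k, l + 1 + l) (k, l + 1) (k, l) ltac:(side) ltac:(side) ltac:(side) ltac:(side) ltac:(side) ltac:(side) ltac:(side) ltac:(side).
have := @key (R[i]) 'i%R _ _ _ _ _ _ _ _ _ _ _ _ _ _ _ _ _ _ _ _ (hi2 R) h1 h2 h3 hl P0 P1 P2 P3 M0 M1 M2 M3.
by [].
Qed.

Theorem proposition3p8 (R : realType) (a b : int) (ha : a < 0) (hb : 0 < b)
    (psi psis : int * int -> Op R a b) (m ms : int * int -> R[i]) :
  fermion_prop psi psis ->
  ICSH a b m ms ->
  closed_form m ms psi psis.
Proof.
move=> hf hm [k l] /andP /= [hk1 hk2] r hr.
have H := @plaq R a b psi psis m ms k l hf hm hk1 hk2.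
case: r hr => [|[|[|[|r]]]] // _ /=;
  move: (form_term m ms psi psis (k, l) (k + 1, l))
    (form_term m ms psi psis (k + 1, l) (k + 1, l + 1))
    (form_term m ms psi psis (k + 1, l + 1) (k, l + 1))
    (form_term m ms psi psis (k, l + 1) (k, l)) H => A B C D H.
- by rewrite addr0 !addrA.
- by rewrite addr0 !addrA addrC !addrA.
- by rewrite addr0 !addrA addrC !addrA addrC !addrA.
- by rewrite addr0 !addrA addrC !addrA addrC !addrA addrC !addrA.
Qed.
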